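(* Let $V$ and $W$ be normal PO-dilators and $\eta:V\Rightarrow W$ a natural isomorphism (of functors on the category of partial orders and quasi embeddings). If $(\mathcal T W,\iota,\kappa)$ is a Kruskal derivative of $W$, then $(\mathcal T W,\iota,\kappa\circ\eta)$ is a Kruskal derivative of $V$, where $(\kappa\circ\eta)_X=\kappa_X\circ\eta_{\mathcal T W(X)}:V(\mathcal T W(X))\to\mathcal T W(X)$.
   Context: A quasi embedding between partial orders $X,Y$ is a function $f$ with $f(x)\leq_Y f(y)\Rightarrow x\leq_X y$; an embedding also satisfies the converse. $\mathrm{PO}$ is the category of partial orders and quasi embeddings. $[X]^{<\omega}$ denotes the finite subsets of $X$, with $[f]^{<\omega}(a)=\{f(x)\mid x\in a\}$. A PO-dilator is a functor $W:\mathrm{PO}\to\mathrm{PO}$ mapping embeddings to embeddings, with a natural transformation $\operatorname{supp}^W:W\Rightarrow[\cdot]^{<\omega}$ such that for every embedding $f:X\to Y$, $\operatorname{rng}(W(f))=\{\sigma\in W(Y)\mid\operatorname{supp}^W_Y(\sigma)\subseteq\operatorname{rng}(f)\}$. For finite $a,b\subseteq X$, $a\leq^{\mathrm{fin}}_X b$ iff every $x\in a$ has some $y\in b$ with $x\leq_X y$ ($z\leq^{\mathrm{fin}}_X b$ means $\{z\}\leq^{\mathrm{fin}}_X b$). $W$ is normal if $\sigma\leq_{W(X)}\tau$ implies $\operatorname{supp}^W_X(\sigma)\leq^{\mathrm{fin}}_X\operatorname{supp}^W_X(\tau)$. A Kruskal fixed point of $W$ over a partial order $X$ is a partial order $Z$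 with functions $\iota:X\to Z$, $\kappa:W(Z)\to Z$ such that $\operatorname{rng}(\iota)\cap\operatorname{rng}(\kappa)=\emptyset$ and, for all $x,y\in X$, $\sigma,\tau\in W(Z)$: $\iota(x)\leq_Z\iota(y)\Rightarrow x\leq_X y$; $\iota(x)\leq_Z\kappa(\tau)$ iff $\iota(x)\leq^{\mathrm{fin}}_Z\operatorname{supp}^W_Z(\tau)$; $\kappa(\sigma)\not\leq_Z\iota(y)$; $\kappa(\sigma)\leq_Z\kappa(\tau)$ iff ($\sigma\leq_{W(Z)}\tau$ or $\kappa(\sigma)\leq^{\mathrm{fin}}_Z\operatorname{supp}^W_Z(\tau)$). It is initial if for every Kruskal fixed point $(Z',\iota',\kappa')$ of $W$ over $X$ there is a unique quasi embedding $f:Z\to Z'$ with $f\circ\iota=\iota'$ and $f\circ\kappa=\kappa'\circ W(f)$. A Kruskal derivative of a normal PO-dilator $W$ is a tuple $(\mathcal T W,\iota,\kappa)$ consisting of a normal PO-dilator $\mathcal T W$ and families of functions $\iota_X:X\to\mathcal T W(X)$, $\kappa_X:W(\mathcal T W(X))\to\mathcal T W(X)$ indexed by partial orders $X$ such that (i) $(\mathcal T W(X),\iota_X,\kappa_X)$ is an initial Kruskal fixed point of $W$ over $X$ for each $X$, and (ii) $\iota_Y\circ f=\mathcal T W(f)\circ\iota_X$ and $\mathcal T W(f)\circ\kappa_X=\kappa_Y\circ W(\mathcal T W(f))$ for every quasi embedding $f:X\to Y$. *)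

(* Defs.v *)
From Stdlib Require Import List.
Import ListNotations.

Set Implicit Arguments.

Record PO := MkPO {
  car :> Type;
  le : car -> car -> Prop;
  le_refl : forall x, le x x;
  le_antisym : forall x y, le x y -> le y x -> x = y;
  le_trans : forall x y z, le x y -> le y z -> le x z
}.
Arguments le {p} _ _.

Definition is_qe (X Y : PO) (f : X -> Y) : Prop :=
  forall x y : X, le (f x) (f y) -> le x y.

Definition is_emb (X Y : PO) (f : X -> Y) : Prop :=
  forall x y : X, le (f x) (f y) <-> le x y.
Arguments is_qe {X Y} f.
Arguments is_emb {X Y} f.

Record QE (X Y : PO) := MkQE {
  qe_fun :> X -> Y;
  qe_prop : is_qe qe_fun
}.

Definition id_qe (X : PO) : QE X X.
Proof. refine (@MkQE X X (fun x => x) _). intros x y h; exact h. Defined.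

Definition comp_qe (X Y Z : PO) (g : QE Y Z) (f : QE X Y) : QE X Z.
Proof.
  refine (@MkQE X Z (fun x => g (f x)) _).
  intros x y h. apply (qe_prop f). apply (qe_prop g). exact h.
Defined.

(** Finite subsets of X are represented by lists; the subset is the set of
    members of the list.  [a <=fin b]: *)
Definition fin_le {X : PO} (a b : list X) : Prop :=
  forall x, In x a -> exists y, In y b /\ le x y.

Record POFunctor := MkPOFunctor {
  F_obj :> PO -> PO;
  F_map : forall X Y : PO, QE X Y -> QE (F_obj X) (F_obj Y);
  (* morphisms are functions: the action only depends on the function *)
  F_ext : forall (X Y : PO) (f g : QE X Y),
      (forall x, f x = g x) -> forall s, F_map f s = F_map g s;
  F_id : forall (X : PO) s, F_map (id_qe X) s = s;
  F_comp : forall (X Y Z : PO) (f : QE X Y) (g : QE Y Z) s,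
      F_map (comp_qe g f) s = F_map g (F_map f s)
}.
Arguments F_map _ {X Y} _.

Record PODilator := MkPODilator {
  D_fun :> POFunctor;
  supp : forall X : PO, D_fun X -> list X;
  D_emb : forall (X Y : PO) (f : QE X Y),
      is_emb f -> is_emb (F_map D_fun f);
  (* supp is a natural transformation W => [.]^{<omega} *)
  D_supp_nat : forall (X Y : PO) (f : QE X Y) (s : D_fun X) (y : Y),
      In y (supp Y (F_map D_fun f s)) <-> exists x, In x (supp X s) /\ f x = y;
  D_supp_rng : forall (X Y : PO) (f : QE X Y), is_emb f ->
      forall t : D_fun Y,
        (exists s, F_map D_fun f s = t) <->
        (forall y, In y (supp Y t) -> exists x, f x = y)
}.

Definition normal (W : PODilator) : Prop :=
  forall (X : PO) (s t : W X), le s t -> fin_le (supp W X s) (supp W X t).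

Definition kruskal_fp (W : PODilator) (X Z : PO)
    (iota : X -> Z) (kappa : W Z -> Z) : Prop :=
  (forall x s, iota x <> kappa s) /\
  (forall x y, le (iota x) (iota y) -> le x y) /\
  (forall x t, le (iota x) (kappa t) <-> fin_le [iota x] (supp W Z t)) /\
  (forall s y, ~ le (kappa s) (iota y)) /\
  (forall s t, le (kappa s) (kappa t) <->
               (le s t \/ fin_le [kappa s] (supp W Z t))).

Definition initial_kruskal_fp (W : PODilator) (X Z : PO)
    (iota : X -> Z) (kappa : W Z -> Z) : Prop :=
  kruskal_fp W X Z iota kappa /\
  forall (Z' : PO) (iota' : X -> Z') (kappa' : W Z' -> Z'),
    kruskal_fp W X Z' iota' kappa' ->
    exists f : QE Z Z',
      ((forall x, f (iota x) = iota' x) /\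
       (forall s, f (kappa s) = kappa' (F_map W f s))) /\
      (forall g : QE Z Z',
         (forall x, g (iota x) = iota' x) ->
         (forall s, g (kappa s) = kappa' (F_map W g s)) ->
         forall z, g z = f z).

Definition kruskal_derivative (W : PODilator) (TW : PODilator)
    (iota : forall X : PO, X -> TW X)
    (kappa : forall X : PO, W (TW X) -> TW X) : Prop :=
  normal TW /\
  (forall X : PO, initial_kruskal_fp W X (TW X) (iota X) (kappa X)) /\
  (forall (X Y : PO) (f : QE X Y),
     (forall x, iota Y (f x) = F_map TW f (iota X x)) /\
     (forall s, F_map TW f (kappa X s) = kappa Y (F_map W (F_map TW f) s))).

Definition nat_iso (V W : POFunctor) (eta : forall X : PO, V X -> W X) : Prop :=
  (forall (X Y : PO) (f : QE X Y) (s : V X),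
     eta Y (F_map V f s) = F_map W f (eta X s)) /\
  (forall X : PO,
     is_qe (eta X) /\
     exists g : W X -> V X, is_qe g /\
       (forall s, g (eta X s) = s) /\ (forall t, eta X (g t) = t)).

(* Main.v *)
Require Import Defs.
From Stdlib Require Import List Classical ProofIrrelevance.
Import ListNotations.

Definition subPO (X:PO) (P : X -> Prop) : PO.
Proof.
refine (@MkPO {x : X | P x} (fun a b => le (proj1_sig a) (proj1_sig b)) _ _ _).
- intros; apply le_refl.
- intros [a pa] [b pb] h1 h2; simpl in *.
  pose proof (le_antisym _ _ _ h1 h2). subst. f_equal. apply proof_irrelevance.
- intros x y z h1 h2; eapply le_trans; eauto.
Defined.

Definition incl (X:PO) (P : X -> Prop) : QE (subPO X P) X.
Proof. refine (@MkQE (subPO X P) X (@proj1_sig _ _) _). intros x y h; exact h. Defined.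

Lemma incl_emb (X:PO) (P : X -> Prop) : is_emb (incl X P).
Proof. intros x y; simpl; tauto. Qed.

Lemma not_in_img (D : PODilator) (X : PO) (y : X) t0 :
  ~ In y (supp D X (F_map D (incl X (fun z => z <> y)) t0)).
Proof.
  intro H. apply D_supp_nat in H. destruct H as [[x px] [_ e]]. simpl in e. exact (px e).
Qed.

Lemma in_rng (D : PODilator) (X : PO) (y : X) t :
  ~ In y (supp D X t) -> exists t0, F_map D (incl X (fun z => z <> y)) t0 = t.
Proof.
  intro H. apply (D_supp_rng D (incl X (fun z => z <> y)) (incl_emb X _)).
  intros y' Hy'. exists (exist _ y' (fun e => H (eq_ind _ (fun w => In w _) Hy' _ e))).
  reflexivity.
Qed.

Lemma supp_eta (V W : PODilator) eta (Hn : nat_iso V W eta) X (s : V X) y :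
  In y (supp W X (eta X s)) <-> In y (supp V X s).
Proof.
  destruct Hn as [Hnat Hiso]. split; intro H; apply NNPP; intro H'.
  - destruct (in_rng V X y s H') as [s0 e]. subst s.
    rewrite Hnat in H. exact (not_in_img W _ _ _ H).
  - destruct (in_rng W X y _ H') as [w0 e].
    destruct (Hiso (subPO X (fun z => z <> y))) as [_ [g [_ [g1 g2]]]].
    destruct (Hiso X) as [_ [gX [_ [gX1 _]]]].
    assert (s = F_map V (incl X (fun z => z <> y)) (g w0)).
    { rewrite <- (gX1 s), <- (gX1 (F_map V _ (g w0))). f_equal.
      rewrite Hnat, g2. auto. }
    subst s. exact (not_in_img V _ _ _ H).
Qed.

Lemma fin_le_supp (V W : PODilator) eta (Hn : nat_iso V W eta) X (Z : PO) (l : list Z) (s : V X) (h : X -> Z) :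
  False -> True.
Proof. auto. Qed.

Lemma emb_of_iso (A B : PO) (e : A -> B) (g : B -> A) :
  is_qe e -> is_qe g -> (forall s, g (e s) = s) -> (forall t, e (g t) = t) ->
  is_emb e /\ is_emb g.
Proof.
  intros He Hg H1 H2. split; intros x y; split; auto.
  - intro h. apply Hg. rewrite !H1. exact h.
  - intro h. apply He. rewrite !H2. exact h.
Qed.

Theorem proposition4p6 (V W : PODilator)
    (eta : forall X : PO, V X -> W X)
    (TW : PODilator)
    (iota : forall X : PO, X -> TW X)
    (kappa : forall X : PO, W (TW X) -> TW X) :
  normal V -> normal W ->
  nat_iso V W eta ->
  kruskal_derivative W TW iota kappa ->
  kruskal_derivative V TW iota (fun X s => kappa X (eta (TW X) s)).
Proof.
  intros _ _ Hn [HN [Hinit Hnat]].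
  assert (Hs := @supp_eta V W eta Hn).
  assert (Hfl : forall (Z : PO) (l : list Z) (s : V Z),
             fin_le l (supp W Z (eta Z s)) <-> fin_le l (supp V Z s)).
  { intros Z l s; unfold fin_le; split; intros H x Hx;
      destruct (H x Hx) as [y [Hy Hle]]; exists y; split; auto; apply Hs; auto. }
  destruct Hn as [Hen Hiso].
  split; [exact HN|split].
  - intro X. destruct (Hinit X) as [[K1 [K2 [K3 [K4 K5]]]] Huniq].
    destruct (Hiso (TW X)) as [eq [g [gq [g1 g2]]]].
    destruct (@emb_of_iso _ _ _ _ eq gq g1 g2) as [ee ge]; unfold is_emb in ee, ge.
    split.
    + split; [|split; [|split; [|split]]].
      * intros x s; apply K1.
      * exact K2.
      * intros x t. rewrite K3. apply Hfl.
      * intros s y. apply K4.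
      * intros s t. rewrite K5, Hfl, ee. tauto.
    + intros Z' iota' kappa' [L1 [L2 [L3 [L4 L5]]]].
      destruct (Hiso Z') as [eq' [g' [gq' [g1' g2']]]].
      destruct (@emb_of_iso _ _ _ _ eq' gq' g1' g2') as [ee' ge']; unfold is_emb in ee', ge'.
      assert (Hfl' : forall (l : list Z') (w : W Z'),
             fin_le l (supp W Z' w) <-> fin_le l (supp V Z' (g' w))).
      { intros l w. rewrite <- Hfl, g2'. tauto. }
      destruct (Huniq Z' iota' (fun w => kappa' (g' w))) as [f [[F1 F2] Fu]].
      { split; [|split; [|split; [|split]]].
        - intros x s; apply L1.
        - exact L2.
        - intros x t. rewrite L3. rewrite Hfl'. tauto.
        - intros s y; apply L4.
        - intros s t. rewrite L5, <- Hfl', ge'. tauto. }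
      exists f. split; [split|].
      * exact F1.
      * intro s. simpl. rewrite F2, <- Hen, g1'. reflexivity.
      * intros h H1 H2 z. apply Fu; auto.
        intro w. rewrite <- (g2 w), H2. f_equal.
        rewrite <- Hen, g1'. reflexivity.
  - intros X Y f. destruct (Hnat X Y f) as [N1 N2]. split; auto.
    intro s. rewrite N2, Hen. reflexivity.
Qed.
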